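(* Let $e\in E_A$. Suppose the monitor state of lifeline $A$ is coherent before evaluating formulas at $e$. Then, for every $\psi\in\mathsf{sub}(\Phi)$, \[ \mathsf{Eval}_A(\psi,e,\mathsf{old}_A)=1 \quad\text{iff}\quad M,e\models\psi . \]
   Context: Setting. $\mathscr L$ is a finite set of lifelines. A message sequence chart (MSC) is $M=(E,\to,\lhd,\mathsf{kind},\mathsf{pid},\mathsf{val})$ with $E$ a finite set of events, $\mathsf{pid}:E\to\mathscr L$, $E_A=\{e\in E\mid \mathsf{pid}(e)=A\}$. The relation $\to$ relates only events on the same lifeline, and for each $A$ its restriction to $E_A$ is the immediate-successor relation of a finite linear order $\leq_A$ (strict version $<_A$). $\mathsf{kind}(e)\in\{\mathsf{act},\mathsf{recv},\mathsf{choice}\}\cup(\{\mathsf{send}\}\times\mathscr L)$. The message relation $\lhd$ is a partial matching: if $s\lhd r$ then $\mathsf{kind}(s)=(\mathsf{send},\mathsf{pid}(r))$, $\mathsf{kind}(r)=\mathsf{recv}$, $\mathsf{pid}(s)\neq\mathsf{pid}(r)$; every receive has exactly one matching send, every send at most one matching receive (not necessarily FIFO). The graph of $\to$ and $\lhd$ edges is acyclic; the causal order $\leq_M$ is its reflexive transitive closure. $\nu_e=\mathsf{val}(e)$ is the valuation (local store of $\mathsf{pid}(e)$ after $e$). $e^B_k$ is the $k$-th event of lifeline $B$ (indexing from 1). Causal Past Logic (CPL): terms $t::=x\mid A.x$ (the value of $x$ at the latest causally visible $A$-event); atoms $\alpha::=p(t_1,\dots,t_n)$; formulas $\varphi::=\alpha\mid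 @_A\varphi\mid \mathsf{Y}\varphi\mid\varphi_1\mathbin{\mathsf{S}}\varphi_2\mid\varphi_1\wedge\varphi_2\mid\varphi_1\vee\varphi_2\mid\neg\varphi$. For $e$ with $\mathsf{pid}(e)=A$: $\mathsf{last}_{\mathsf{loc}}(e)=\max\{f\in E_A\mid f<_A e\}$ and, for any $B$, $\mathsf{last}_B(e)=\max\{f\in E_B\mid f\leq_M e\}$ (when these exist). Term values: $x$ evaluates to $\nu_e(x)$; $A.x$ evaluates to $\nu_{\mathsf{last}_A(e)}(x)$ when defined. An atom is false if any of its terms is undefined; otherwise its truth ($\nu_e\models_M\alpha$) is fixed by the application. $M,e\models\mathsf{Y}\varphi$ iff $\mathsf{last}_{\mathsf{loc}}(e)$ exists and satisfies $\varphi$; $M,e\models @_A\varphi$ iff $\mathsf{last}_A(e)$ exists and satisfies $\varphi$ (non-strict: equals $e$ if $e\in E_A$); for $e\in E_A$, $M,e\models\varphi_1\mathbin{\mathsf{S}}\varphi_2$ iff some $f\in E_A$ with $f\leq_A e$ satisfies $\varphi_2$ and every $g\in E_A$ with $f<_A g\leq_A e$ satisfies $\varphi_1$; Boolean connectives as usual. Monitor. $\Phi$ is a finite set of CPL formulas, $\mathsf{sub}(\Phi)$ its subformulas, $\mathsf{Vars}(\Phi)$ the variable names occurring in terms $B.x$. Each lifeline $A$ keeps: a vector clock $\mathsf{vc}_A:\mathscr L\to\mathbb N$; a partial Boolean view $\mathsf{view}_A:\mathscr L\times\mathsf{sub}(\Phi)\rightharpoonup\{0,1\}$; a partial variable view $\mathsf{var}_A:\mathscr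 L\times\mathsf{Vars}(\Phi)\rightharpoonup\mathsf{Val}$; a local store $\sigma_A$; a total map $\mathsf{old}_A:\mathsf{sub}(\Phi)\to\{0,1\}$. The procedure $\mathsf{Eval}_A(\psi,e,\mathsf{old}_A)$ computes: for an atom $\alpha$, its truth with unqualified variables read from $\sigma_A$ and terms $B.x$ read from $\mathsf{var}_A(B,x)$ (a missing entry makes the atom false); $\mathsf{Y}\theta\mapsto(\mathsf{vc}_A(A)>1)\wedge\mathsf{old}_A(\theta)$; $@_B\theta\mapsto$ $\mathsf{Eval}_A(\theta,e,\mathsf{old}_A)$ if $B=A$, else $0$ if $\mathsf{vc}_A(B)=0$, else $\mathsf{view}_A(B,\theta)$; $\theta_1\mathbin{\mathsf{S}}\theta_2\mapsto \mathsf{Eval}_A(\theta_2,\cdot)\vee(\mathsf{Eval}_A(\theta_1,\cdot)\wedge(\mathsf{vc}_A(A)>1)\wedge\mathsf{old}_A(\theta_1\mathbin{\mathsf{S}}\theta_2))$; $\neg,\wedge,\vee$ computed recursively. Coherence. For $e\in E_A$, the state of $A$ is coherent before evaluating formulas at $e$ if: (i) for every lifeline $B$, $\mathsf{vc}_A(B)=|\{f\in E_B\mid f\leq_M e\}|$; (ii) for every $B\neq A$ with $k=\mathsf{vc}_A(B)>0$, $\mathsf{view}_A(B,\psi)$ is defined and equals $1$ iff $M,e^B_k\models\psi$ for all $\psi\in\mathsf{sub}(\Phi)$, and $\mathsf{var}_A(B,x)=\mathsf{val}(e^B_k)(x)$ for all $x\in\mathsf{Vars}(\Phi)$; if $\mathsf{vc}_A(B)=0$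 all entries for $B$ are absent; (iii) $\sigma_A(x)=\mathsf{val}(e)(x)$ for every monitored unqualified variable $x$, and $\mathsf{var}_A(A,x)$ is defined and equal to $\mathsf{val}(e)(x)$ for every $x\in\mathsf{Vars}(\Phi)$ (no condition on $\mathsf{view}_A(A,\cdot)$); (iv) for every $\psi\in\mathsf{sub}(\Phi)$, $\mathsf{old}_A(\psi)$ is the truth value of $\psi$ at the previous local event of $A$ if it exists, and false otherwise. *)

(* Defs.v *)
From mathcomp Require Import all_boot.
From Stdlib Require Import List.

Set Implicit Arguments.
Unset Strict Implicit.
Unset Printing Implicit Defensive.

Section MSCDefs.

(* Lifelines (finite), variable names, values, atomic predicate symbols. *)
Variables (L : finType) (X Val P : Type).

Inductive kind_t := KAct | KRecv | KChoice | KSend of L.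

(* A message sequence chart.  [lle] is the per-lifeline linear order <=_A
   (relating only events on the same lifeline); [succ] is the relation ->,
   required to be exactly the immediate-successor relation of <=_A. *)
Record MSC := {
  ev : finType;
  pid : ev -> L;
  succ : rel ev;
  msg : rel ev;
  kind : ev -> kind_t;
  val : ev -> X -> Val;
  lle : rel ev;
  lle_pid : forall e f, lle e f -> pid e = pid f;
  lle_refl : forall e, lle e e;
  lle_anti : forall e f, lle e f -> lle f e -> e = f;
  lle_trans : forall e f g, lle e f -> lle f g -> lle e g;
  lle_total : forall e f, pid e = pid f -> lle e f || lle f e;
  succ_spec : forall e f, succ e f <->
     [/\ pid e = pid f, lle e f, e <> f &
         forall g, lle e g -> lle g f -> g = e \/ g = f];
  msg_kind : forall s r, msg s r ->
     [/\ kind s = KSend (pid r), kind r = KRecv & pid s <> pid r];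
  recv_has_send : forall r, kind r = KRecv ->
     exists s, msg s r /\ forall s', msg s' r -> s' = s;
  send_at_most_once : forall s r r', msg s r -> msg s r' -> r = r';
  acyclic : forall e f, (succ e f || msg e f) ->
     ~~ connect (fun a b => succ a b || msg a b) f e
}.

Inductive term := TVar of X | TQual of L & X.

Inductive form :=
| FAtom of P & list term
| FAt of L & form
| FY of form
| FS of form & form
| FAnd of form & form
| FOr of form & form
| FNot of form.

Fixpoint opt_all (s : list (option Val)) : option (list Val) :=
  match s with
  | nil => Some nil
  | cons None _ => None
  | cons (Some v) s' => omap (cons v) (opt_all s')
  end.

Variable M : MSC.
Variable interp : P -> list Val -> bool.

Definition edge : rel (ev M) := fun a b => succ a b || msg a b.
Definition causal (f e : ev M) : bool := connect edge f e.
Definition llt (f e : ev M) : bool := lle f e && (f != e).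

Definition last_loc (e : ev M) : option (ev M) :=
  [pick f | [&& pid f == pid e, llt f e &
     [forall g, ((pid g == pid e) && llt g e) ==> lle g f]]].

Definition last_of (B : L) (e : ev M) : option (ev M) :=
  [pick f | [&& pid f == B, causal f e &
     [forall g, ((pid g == B) && causal g e) ==> lle g f]]].

Definition term_val (e : ev M) (t : term) : option Val :=
  match t with
  | TVar x => Some (val e x)
  | TQual B x => omap (fun f => val f x) (last_of B e)
  end.

Definition atom_holds (e : ev M) (p : P) (ts : list term) : bool :=
  match opt_all (map (term_val e) ts) with
  | Some vs => interp p vs
  | None => false
  end.

Fixpoint sat (phi : form) (e : ev M) {struct phi} : Prop :=
  match phi with
  | FAtom p ts => atom_holds e p ts
  | FAt B psi => exists f, last_of B e = Some f /\ sat psi f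
  | FY psi => exists f, last_loc e = Some f /\ sat psi f
  | FS psi1 psi2 => exists f, [/\ pid f = pid e, lle f e, sat psi2 f &
       forall g, pid g = pid e -> llt f g -> lle g e -> sat psi1 g]
  | FAnd psi1 psi2 => sat psi1 e /\ sat psi2 e
  | FOr psi1 psi2 => sat psi1 e \/ sat psi2 e
  | FNot psi => ~ sat psi e
  end.

(* e^B_k : the k-th event (1-based) of lifeline B *)
Definition kth (B : L) (k : nat) (f : ev M) : bool :=
  (pid f == B) && (#|[pred g | (pid g == B) && lle g f]| == k).

End MSCDefs.

Section Monitor.
Variables (L : finType) (X Val P : Type).

Fixpoint subf (phi : form L X P) : list (form L X P) :=
  phi :: match phi with
         | FAtom _ _ => nil
         | FAt _ psi | FY psi | FNot psi => subf psi
         | FS a b | FAnd a b | FOr a b => subf a ++ subf b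
         end.

Definition in_sub (Phi : list (form L X P)) (psi : form L X P) : Prop :=
  exists phi, In phi Phi /\ In psi (subf phi).

Fixpoint qvars (phi : form L X P) : list X :=
  match phi with
  | FAtom _ ts => flat_map (fun t => match t with TQual _ x => x :: nil | TVar _ => nil end) ts
  | FAt _ psi | FY psi | FNot psi => qvars psi
  | FS a b | FAnd a b | FOr a b => qvars a ++ qvars b
  end.

Fixpoint uvars (phi : form L X P) : list X :=
  match phi with
  | FAtom _ ts => flat_map (fun t => match t with TVar x => x :: nil | TQual _ _ => nil end) ts
  | FAt _ psi | FY psi | FNot psi => uvars psi
  | FS a b | FAnd a b | FOr a b => uvars a ++ uvars b
  end.

Definition in_Vars (Phi : list (form L X P)) (x : X) : Prop :=
  exists phi, In phi Phi /\ In x (qvars phi).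

Definition in_UVars (Phi : list (form L X P)) (x : X) : Prop :=
  exists phi, In phi Phi /\ In x (uvars phi).

Record mstate := {
  vc : L -> nat;
  view : L -> form L X P -> option bool;
  var : L -> X -> option Val;
  sigma : X -> Val;
  old : form L X P -> bool
}.

Variable interp : P -> list Val -> bool.

(* Eval_A(psi, e, old_A); the event e plays no role in the computation. *)
Fixpoint Eval (A : L) (st : mstate) (oldA : form L X P -> bool)
    (psi : form L X P) {struct psi} : bool :=
  match psi with
  | FAtom p ts =>
      match opt_all (map (fun t => match t with
                                   | TVar x => Some (sigma st x)
                                   | TQual B x => var st B x
                                   end) ts) with
      | Some vs => interp p vs
      | None => false
      end
  | FY th => (1 < vc st A) && oldA th
  | FAt B th =>
      if B == A then Eval A st oldA th
      else if vc st B == 0 then false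
      else odflt false (view st B th)
  | FS th1 th2 =>
      Eval A st oldA th2 ||
      [&& Eval A st oldA th1, 1 < vc st A & oldA (FS th1 th2)]
  | FAnd a b => Eval A st oldA a && Eval A st oldA b
  | FOr a b => Eval A st oldA a || Eval A st oldA b
  | FNot a => ~~ Eval A st oldA a
  end.

Definition coherent (M : MSC L X Val) (Phi : list (form L X P)) (A : L)
    (st : mstate) (e : ev M) : Prop :=
  [/\ (* (i) *)
      forall B, vc st B = #|[pred f | (pid f == B) && causal f e]|,
      (* (ii) *)
      (forall B, B <> A -> 0 < vc st B ->
         forall f : ev M, kth B (vc st B) f ->
           (forall psi, in_sub Phi psi ->
              exists b, view st B psi = Some b /\ (b = true <-> sat interp psi f)) /\
           (forall x, in_Vars Phi x -> var st B x = Some (val f x))),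
      (forall B, B <> A -> vc st B = 0 ->
         (forall psi, in_sub Phi psi -> view st B psi = None) /\
         (forall x, in_Vars Phi x -> var st B x = None)),
      (forall x, in_UVars Phi x -> sigma st x = val e x) /\
      (forall x, in_Vars Phi x -> var st A x = Some (val e x)) &
      forall psi, in_sub Phi psi ->
        (old st psi = true <-> exists f, last_loc e = Some f /\ sat interp psi f)].

End Monitor.

(* Main.v *)
Require Import Defs.
From mathcomp Require Import all_boot.
From Stdlib Require Import List.
Set Implicit Arguments. Unset Strict Implicit. Unset Printing Implicit Defensive.

Section Aux.
Variables (L : finType) (X Val : Type) (M : MSC L X Val).
Implicit Types e f g : ev M.

Definition rk f := #|[pred h | lle h f]|.

Lemma rk_lt f g : lle f g -> f != g -> rk f < rk g.
Proof.
move=> H ne; apply: proper_card; apply/properP; split.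
- apply/subsetP => h; rewrite !inE => Hh; exact: lle_trans Hh H.
- exists g; rewrite !inE ?lle_refl //. apply/negP => Hgf.
  by move/eqP: ne; apply; apply: lle_anti.
Qed.

Lemma rk_le f g : pid f = pid g -> rk f <= rk g -> lle f g.
Proof.
move=> Hp Hr; case/orP: (lle_total Hp) => // Hgf.
case: (eqVneq g f) => [->|ne]; first exact: lle_refl.
have := rk_lt Hgf ne. by rewrite ltnNge Hr.
Qed.

Lemma exists_max (S : pred (ev M)) a f0 : S f0 -> (forall g, S g -> pid g = a) ->
  exists m, S m /\ forall g, S g -> lle g m.
Proof.
move=> S0 HS.
case: (arg_maxnP rk S0) => m Sm Hm.
exists m; split=> // g Sg. apply: rk_le; first by rewrite (HS _ Sg) (HS _ Sm).
exact: Hm.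
Qed.

Lemma exists_min (S : pred (ev M)) a f0 : S f0 -> (forall g, S g -> pid g = a) ->
  exists m, S m /\ forall g, S g -> lle m g.
Proof.
move=> S0 HS.
case: (arg_minnP rk S0) => m Sm Hm.
exists m; split=> // g Sg. apply: rk_le; first by rewrite (HS _ Sg) (HS _ Sm).
exact: Hm.
Qed.

Lemma lle_connect n e f : #|[pred g | lle e g && lle g f]| <= n -> lle e f ->
  connect (@succ _ _ _ M) e f.
Proof.
elim: n e => [|n IH] e Hc Hef.
  move: Hc; rewrite leqn0 => /eqP/card0_eq/(_ e).
  by rewrite !inE lle_refl Hef.
case: (eqVneq e f) => [->|ne]; first exact: connect0.
have [m [Sm Hm]] : exists m, [&& lle e m, m != e & lle m f] /\
    forall g, [&& lle e g, g != e & lle g f] -> lle m g.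
  apply: (@exists_min [pred g | [&& lle e g, g != e & lle g f]] (pid e) f).
    by rewrite /= Hef eq_sym ne lle_refl.
  by move=> g /= /and3P[H _ _]; rewrite (lle_pid H).
move: Sm => /and3P [Hem Hme Hmf].
have Hs : succ e m.
  apply/succ_spec; split => //; first exact: lle_pid Hem.
  - by move=> E; rewrite E eqxx in Hme.
  - move=> g Heg Hgm; case: (eqVneq g e) => [->|gne]; first by left.
    right; apply: lle_anti => //; apply: Hm; rewrite Heg gne.
    exact: lle_trans Hgm Hmf.
apply: connect_trans (connect1 Hs) (IH _ _ Hmf).
rewrite -ltnS; apply: leq_trans Hc; apply: proper_card; apply/properP; split.
- apply/subsetP => h; rewrite !inE => /andP[H1 H2]; rewrite H2 andbT.
  exact: lle_trans Hem H1.
- exists e; rewrite !inE ?lle_refl ?Hef //=. apply/negP => /andP [Hme' _].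
  by move: Hme; rewrite (lle_anti Hme' Hem) eqxx.
Qed.

Lemma lle_causal e f : lle e f -> causal e f.
Proof.
move=> H; have := lle_connect (leqnn _) H.
apply: connect_sub => a b Hab; apply: connect1; by rewrite /edge Hab.
Qed.

Lemma causal_lle g e : pid g = pid e -> causal g e -> lle g e.
Proof.
move=> Hp Hc; case/orP: (lle_total Hp) => // Heg.
case: (eqVneq e g) => [->|ne]; first exact: lle_refl.
have Hc2 : causal e g := lle_causal Heg.
case/connectP: Hc2 => [[|a p]] /=; first by move=> _ E; rewrite E eqxx in ne.
case/andP => Hea Hp' Hl.
have : connect (@edge _ _ _ M) a e.
  apply: connect_trans Hc. apply/connectP; by exists p.
by move/negP: (acyclic Hea).
Qed.

Lemma last_ofP B e f : last_of B e = Some f ->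
  [/\ pid f = B, causal f e & forall g, pid g = B -> causal g e -> lle g f].
Proof.
rewrite /last_of; case: pickP => // m /and3P [/eqP H1 H2 /forallP H3] [<-].
split=> // g Hg Hc; move/implyP: (H3 g); apply; by rewrite Hg eqxx Hc.
Qed.

Lemma last_of_some B e f : pid f = B -> causal f e ->
  (forall g, pid g = B -> causal g e -> lle g f) -> last_of B e = Some f.
Proof.
move=> H1 H2 H3; rewrite /last_of; case: pickP => [m /and3P [/eqP m1 m2 /forallP m3]|].
- congr Some; apply: lle_anti; first exact: H3.
  by move/implyP: (m3 f); apply; rewrite H1 eqxx H2.
- move/(_ f); rewrite H1 eqxx H2 /= => /negbT/negP; case.
  apply/forallP => g; apply/implyP => /andP[/eqP ? ?]; exact: H3.
Qed.

Lemma last_of_none B e : (forall f, pid f = B -> ~~ causal f e) -> last_of B e = None.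
Proof.
move=> H; rewrite /last_of; case: pickP => // m /and3P [/eqP m1 m2 _].
by move: (H m m1); rewrite m2.
Qed.

Lemma last_locP e p : last_loc e = Some p ->
  [/\ pid p = pid e, llt p e & forall g, pid g = pid e -> llt g e -> lle g p].
Proof.
rewrite /last_loc; case: pickP => // m /and3P [/eqP H1 H2 /forallP H3] [<-].
split=> // g Hg Hc; move/implyP: (H3 g); apply; by rewrite Hg eqxx Hc.
Qed.

Lemma last_loc_some e f : pid f = pid e -> llt f e -> exists p, last_loc e = Some p.
Proof.
move=> H1 H2; rewrite /last_loc; case: pickP => [m _|]; first by exists m.
have [m [Sm Hm]] : exists m, ((pid m == pid e) && llt m e) /\
    forall g, (pid g == pid e) && llt g e -> lle g m.
  apply: (@exists_max [pred g | (pid g == pid e) && llt g e] (pid e) f).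
    by rewrite /= H1 eqxx H2.
  by move=> g /= /andP[/eqP -> _].
move/(_ m); move: Sm => /andP[-> ->] /= /negbT/negP; case.
apply/forallP => g; apply/implyP => Hg; exact: Hm.
Qed.

End Aux.

Lemma In_cat (T : Type) (x : T) (s1 s2 : list T) : In x (seq.cat s1 s2) <-> In x s1 \/ In x s2.
Proof.
have -> : seq.cat s1 s2 = app s1 s2 by elim: s1 => //= a s1 ->.
by split; [apply: in_app_or|apply: in_or_app].
Qed.

Section Sub.
Variables (L : finType) (X P : Type).

Lemma In_self (psi : form L X P) : In psi (subf psi).
Proof. by case: psi => *; left. Qed.

Lemma subf_trans (phi psi chi : form L X P) :
  In psi (subf phi) -> In chi (subf psi) -> In chi (subf phi).
Proof.
elim: phi => [p ts|B a IH|a IH|a IHa b IHb|a IHa b IHb|a IHa b IHb|a IH] /=;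
  move=> [<-|H] Hc //; right;
  try (by case: H); try (by apply: IH);
  by case/In_cat: H => H; apply/In_cat; [left; apply: IHa|right; apply: IHb].
Qed.

Lemma qvars_sub (phi psi : form L X P) x :
  In psi (subf phi) -> In x (qvars psi) -> In x (qvars phi).
Proof.
elim: phi => [p ts|B a IH|a IH|a IHa b IHb|a IHa b IHb|a IHa b IHb|a IH] /=;
  move=> [<-|H] Hc //;
  try (by case: H); try (by apply: IH);
  by case/In_cat: H => H; apply/In_cat; [left; apply: IHa|right; apply: IHb].
Qed.

Lemma uvars_sub (phi psi : form L X P) x :
  In psi (subf phi) -> In x (uvars psi) -> In x (uvars phi).
Proof.
elim: phi => [p ts|B a IH|a IH|a IHa b IHb|a IHa b IHb|a IHa b IHb|a IH] /=;
  move=> [<-|H] Hc //;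
  try (by case: H); try (by apply: IH);
  by case/In_cat: H => H; apply/In_cat; [left; apply: IHa|right; apply: IHb].
Qed.

Lemma in_sub_sub Phi (psi chi : form L X P) :
  in_sub Phi psi -> In chi (subf psi) -> in_sub Phi chi.
Proof. by case=> phi [H1 H2] H3; exists phi; split => //; apply: subf_trans H3. Qed.

End Sub.

Theorem lemma1 (L : finType) (X Val P : Type) (interp : P -> list Val -> bool)
    (M : MSC L X Val) (Phi : list (form L X P)) (A : L)
    (st : mstate L X Val P) (e : ev M) :
  pid e = A ->
  coherent interp Phi A st e ->
  forall psi, in_sub Phi psi ->
    (Eval interp A st (old st) psi = true <-> sat interp psi e).
Proof.
move=> HA; subst A => -[Hvc Hii Hii0 [Hsig HvarA] Hold].
have lastA : last_of (pid e) e = Some e.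
  apply: last_of_some => //; first exact: connect0.
  by move=> g Hg Hc; apply: causal_lle.
have lastB : forall B, B <> pid e -> (vc st B = 0 /\ last_of B e = None) \/
    (0 < vc st B /\ exists f, last_of B e = Some f /\ kth B (vc st B) f).
  move=> B ne; case: (posnP (vc st B)) => H0; [left|right]; split => //.
    apply: last_of_none => f Hf; apply/negP => Hc.
    move: H0; rewrite Hvc => /eqP; rewrite -leqn0 leqNgt => /negP; apply.
    apply/card_gt0P; exists f; by rewrite inE Hf eqxx Hc.
  move: (H0); rewrite Hvc => /card_gt0P [f0 Hf0].
  have [m [Sm Hm]] : exists m, ((pid m == B) && causal m e) /\
      forall g, (pid g == B) && causal g e -> lle g m.
    apply: (@exists_max _ _ _ _ [pred g | (pid g == B) && causal g e] B f0) => //.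
    by move=> g /= /andP[/eqP -> _].
  move: Sm => /andP [/eqP Hm1 Hm2].
  exists m; split.
    apply: last_of_some => // g Hg Hc; apply: Hm; by rewrite Hg eqxx Hc.
  rewrite /kth Hm1 eqxx /=; apply/eqP; apply: eq_card => g; rewrite !inE.
  apply/andP/andP => [[/eqP Hg Hl]|[Hg Hc]]; split => //.
    rewrite Hg eqxx //.
    exact: connect_trans (lle_causal Hl) Hm2.
  by apply: Hm; rewrite Hg Hc.
have Hvc2 : forall p, last_loc e = Some p -> 1 < vc st (pid e).
  move=> p /last_locP [Hp1 /andP[Hp2 Hp3] _].
  rewrite Hvc; apply: leq_trans (_ : #|pred2 p e| <= _).
    by rewrite card2 Hp3.
  apply: subset_leq_card; apply/subsetP => h; rewrite !inE => /orP[/eqP->|/eqP->].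
    by rewrite Hp1 eqxx lle_causal.
  by rewrite eqxx; apply: connect0.
elim=> [p ts|B th IH|th IH|a IHa b IHb|a IHa b IHb|a IHa b IHb|a IHa] Hsub /=.
-
  rewrite /atom_holds.
  have -> : List.map (fun t => match t with
                                   | TVar x => Some (sigma st x)
                                   | TQual B x => var st B x
                                   end) ts = List.map (term_val e) ts.
    apply: List.map_ext_in => t Ht; case: t Ht => [x|B x] Ht /=.
      congr Some; apply: Hsig.
      case: Hsub => phi [Hphi Hin]; exists phi; split => //.
      apply: (uvars_sub Hin) => /=; apply/in_flat_map; exists (TVar _ x).
      by split => //; left.
    have Hx : in_Vars Phi x.
      case: Hsub => phi [Hphi Hin]; exists phi; split => //.
      apply: (qvars_sub Hin) => /=; apply/in_flat_map; exists (TQual B x).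
      by split => //; left.
    case: (eqVneq B (pid e)) => [->|ne].
      by rewrite lastA /=; apply: HvarA.
    case: (lastB B (elimN eqP ne)) => [[H0 Hl]|[Hpos [f [Hl Hk]]]]; rewrite Hl /=.
      exact: ((Hii0 B (elimN eqP ne) H0).2 x Hx).
    exact: ((Hii B (elimN eqP ne) Hpos f Hk).2 x Hx).
  by [].
-
  have Hs : in_sub Phi th by apply: (in_sub_sub Hsub); right; exact: In_self.
  case: (eqVneq B (pid e)) => [->|ne].
    split.
      by move/(IH Hs) => H; exists e.
    by case=> f [Hf Hs']; rewrite lastA in Hf; case: Hf => Ef; by apply/(IH Hs); rewrite Ef.
  idtac.
  case: (lastB B (elimN eqP ne)) => [[H0 Hl]|[Hpos [f [Hl Hk]]]].
    by rewrite H0 eqxx; split => // -[f [Hf _]]; rewrite Hl in Hf.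
  have -> : (vc st B == 0) = false by rewrite eqn0Ngt Hpos.
  have [bv [Hv Hb]] := (Hii B (elimN eqP ne) Hpos f Hk).1 th Hs.
  rewrite Hv /=; split.
    by move/Hb => H; exists f.
  by case=> f' [Hf' Hs']; rewrite Hl in Hf'; case: Hf' => Ef; apply/Hb; rewrite Ef.
-
  have Hs : in_sub Phi th by apply: (in_sub_sub Hsub); right; exact: In_self.
  split.
    by case/andP => _ /(Hold _ Hs).
  move=> H; apply/andP; split; last exact/(Hold _ Hs).
  by case: H => p [Hp _]; exact: Hvc2 Hp.
-
  have s1 : in_sub Phi a by apply: (in_sub_sub Hsub); right; apply/In_cat; left; exact: In_self.
  have s2 : in_sub Phi b by apply: (in_sub_sub Hsub); right; apply/In_cat; right; exact: In_self.
  move: (IHa s1) (IHb s2) => {IHa IHb} IHa IHb.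
  split.
  + case/orP => [/IHb H2 | /and3P [/IHa H1 Hv Ho]].
      exists e; split => //; first exact: lle_refl.
      move=> g _ /andP [Hl Hne] Hge; by case/eqP: Hne; apply: lle_anti.
    case/(Hold _ Hsub): Ho => p [Hp [f [Hf1 Hf2 Hf3 Hf4]]].
    case/last_locP: Hp => Hp1 /andP[Hp2 Hp3] Hp4.
    exists f; split.
    * by rewrite Hf1 Hp1.
    * exact: lle_trans Hf2 Hp2.
    * done.
    * move=> g Hg Hfg Hge. case: (eqVneq g e) => [->|ne]; first done.
      apply: Hf4; [by rewrite Hg Hp1 | done | apply: Hp4 => //; by rewrite /llt Hge ne].
  + case=> f [Hf1 Hf2 Hf3 Hf4].
    case: (eqVneq f e) => [Efe|ne].
      by move: Hf3; rewrite Efe => /IHb ->.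
    have Hlt : llt f e by rewrite /llt Hf2 ne.
    have [p Hp] := last_loc_some Hf1 Hlt.
    case/last_locP: (Hp) => Hp1 /andP[Hp2 Hp3] Hp4.
    apply/orP; right; apply/and3P; split.
    * apply/IHa; apply: Hf4 => //; exact: lle_refl.
    * exact: Hvc2 Hp.
    * apply/(Hold _ Hsub); exists p; split => //. exists f; split.
      -- by rewrite Hf1 Hp1.
      -- exact: Hp4.
      -- done.
      -- move=> g Hg Hfg Hgp; apply: Hf4 => //; [by rewrite Hg Hp1 | exact: lle_trans Hgp Hp2].
-
  have s1 : in_sub Phi a by apply: (in_sub_sub Hsub); right; apply/In_cat; left; exact: In_self.
  have s2 : in_sub Phi b by apply: (in_sub_sub Hsub); right; apply/In_cat; right; exact: In_self.
  move: (IHa s1) (IHb s2) => {IHa IHb} IHa IHb.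
  split; first by case/andP => /IHa ? /IHb ?.
  by case=> /IHa -> /IHb ->.
-
  have s1 : in_sub Phi a by apply: (in_sub_sub Hsub); right; apply/In_cat; left; exact: In_self.
  have s2 : in_sub Phi b by apply: (in_sub_sub Hsub); right; apply/In_cat; right; exact: In_self.
  move: (IHa s1) (IHb s2) => {IHa IHb} IHa IHb.
  split; first by case/orP => [/IHa|/IHb]; auto.
  by case=> [/IHa|/IHb] ->; rewrite ?orbT.
-
  have s1 : in_sub Phi a by apply: (in_sub_sub Hsub); right; exact: In_self.
  move: (IHa s1) => {IHa} IHa.
  split.
    move=> /negP H Hs; apply: H; exact/IHa.
  move=> H; apply/negP => Hs; apply: H; exact/IHa.
Qed.
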